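(* Let $N$ be a lattice, let $\sigma\subset N_{\mathbb R}=N\otimes_{\mathbb Z}\mathbb R$ be a strongly convex rational polyhedral cone, let $\Delta$ be a rational simplicial subdivision of $\sigma$, and let $v_1,\ldots,v_s$ be the primitive generators of the rays of $\Delta$. Then, in the quotient field of $\mathbb Z[N]$, \[ (1-x^{v_1})\cdots(1-x^{v_s})\cdot G_\sigma \;=\; H_\Delta+\sum_{\tau\in\Delta^{\mathrm{sing}}}\Bigl(B_\tau\cdot H_{\operatorname{lk}\tau}\cdot\prod_{v_i\notin\operatorname{Star}\tau}(1-x^{v_i})\Bigr). \]
   Context: $\mathbb Z[N]$ is the Laurent polynomial (group) ring of $N$, with monomials $x^v$ for $v\in N$. $G_\sigma=\sum_{v\in\sigma\cap N}x^v$ is the generating function of lattice points of $\sigma$ (a rational function). For a cone $\tau$ we write $v_i\in\tau$ to mean that $v_i$ generates a ray of $\tau$. Define $H_\Delta=\sum_{\tau\in\Delta}\bigl(\prod_{v_i\in\tau}x^{v_i}\cdot\prod_{v_j\notin\tau}(1-x^{v_j})\bigr)$, the sum over all cones of $\Delta$ (including the zero cone). A cone is unimodular if it is spanned by part of a basis of $N$; $\Delta^{\mathrm{sing}}$ is the set of cones of $\Delta$ that are not unimodular. For $\tau\in\Delta$ spanned by $v_1,\ldots,v_r$ (after renumbering), $\operatorname{Box}(\tau)=\{a_1v_1+\cdots+a_rv_r : 0<a_i<1\}$ and $B_\tau=\sum_{v\in\operatorname{Box}(\tau)\cap N}x^v$. The link $\operatorname{lk}\tau$ is the set of cones $\gamma\in\Delta$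 with $\gamma\cap\tau=0$ and $\gamma+\tau\in\Delta$; $v_j\in\operatorname{lk}\tau$ means $v_j$ generates a ray of some cone of $\operatorname{lk}\tau$, and $H_{\operatorname{lk}\tau}=\sum_{\gamma\in\operatorname{lk}\tau}\bigl(\prod_{v_i\in\gamma}x^{v_i}\cdot\prod_{v_j\in\operatorname{lk}\tau,\,v_j\notin\gamma}(1-x^{v_j})\bigr)$. $\operatorname{Star}\tau$ is the union of the maximal cones of $\Delta$ containing $\tau$, and $v_i\notin\operatorname{Star}\tau$ means $v_i$ does not generate a ray of any such cone. *)

(* Defs.v *)
(* Lattice N = Z^n (row vectors 'rV[int]_n), N_R = 'rV[R]_n
   for a real type R.  Laurent polynomials in Z[N] are finite formal sums
   (lists of (coefficient, exponent) pairs); formal (possibly infinite)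
   sums such as G_sigma and B_tau are coefficient functions N -> int. *)
From HB Require Import structures.
From mathcomp Require Import all_boot all_order all_algebra.
From mathcomp Require Import boolp reals.
Set Implicit Arguments. Unset Strict Implicit. Unset Printing Implicit Defensive.
Import Order.TTheory GRing.Theory Num.Theory.
Local Open Scope ring_scope.

Section Defs.
Variable n : nat.

Definition toR (R : realType) (w : 'rV[int]_n) : 'rV[R]_n :=
  map_mx (fun z : int => z%:~R) w.

Definition primitive (w : 'rV[int]_n) : Prop :=
  w != 0 /\ forall (k : int) (w' : 'rV[int]_n), w = k *: w' -> `|k| = 1.

Definition cone_of (R : realType) (I : finType) (S : {set I})
    (u : I -> 'rV[R]_n) (x : 'rV[R]_n) : Prop :=
  exists c : I -> R, (forall i, 0 <= c i) /\ x = \sum_(i in S) c i *: u i.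

Definition lpoly := seq (int * 'rV[int]_n).
Definition lcoef (p : lpoly) (w : 'rV[int]_n) : int :=
  \sum_(t <- p | t.2 == w) t.1.
Definition lone : lpoly := [:: (1, 0)].
Definition lmon (v : 'rV[int]_n) : lpoly := [:: (1, v)].
Definition l1m (v : 'rV[int]_n) : lpoly := [:: (1, 0); (-1, v)].
Definition lmul (p q : lpoly) : lpoly :=
  [seq (a.1 * b.1, a.2 + b.2) | a <- p, b <- q].
Definition lprod (I : finType) (A : {set I}) (F : I -> lpoly) : lpoly :=
  foldr (fun i acc => lmul (F i) acc) lone (enum A).
Definition lsum (I : finType) (A : {set I}) (F : I -> lpoly) : lpoly :=
  flatten [seq F i | i <- enum A].

(* product of a Laurent polynomial p with a formal sum f (coefficient
   function N -> int): coefficient of x^w *)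
Definition conv (p : lpoly) (f : 'rV[int]_n -> int) (w : 'rV[int]_n) : int :=
  \sum_(t <- p) t.1 * f (w - t.2).

Definition indic (P : 'rV[int]_n -> Prop) (w : 'rV[int]_n) : int :=
  if `[< P w >] then 1 else 0.

(* ---------- the simplicial fan Delta on rays v : 'I_s -> N ----------
   A cone of Delta is recorded by the set tau of indices of its rays;
   the cone itself is cone_of tau (toR \o v). *)
Variable s : nat.

Definition unimodular (R : realType) (v : 'I_s -> 'rV[int]_n)
    (tau : {set 'I_s}) : Prop :=
  exists B : 'M[int]_n, B \in unitmx /\ exists J : {set 'I_n},
    forall x : 'rV[R]_n,
      cone_of tau (fun i => toR R (v i)) x <->
      cone_of J (fun j => toR R (row j B)) x.

Definition link (D : {set {set 'I_s}}) (tau : {set 'I_s}) : {set {set 'I_s}} :=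
  [set g in D | (g :&: tau == set0) && (g :|: tau \in D)].

Definition link_rays (D : {set {set 'I_s}}) (tau : {set 'I_s}) : {set 'I_s} :=
  [set j | [exists g in link D tau, j \in g]].

Definition maximal_cone (D : {set {set 'I_s}}) (S : {set 'I_s}) : bool :=
  (S \in D) && [forall S' in D, ~~ (S \proper S')].

Definition not_in_star (D : {set {set 'I_s}}) (tau : {set 'I_s}) : {set 'I_s} :=
  [set i | [forall S, (maximal_cone D S && (tau \subset S)) ==> (i \notin S)]].

Definition H_fan (v : 'I_s -> 'rV[int]_n) (D : {set {set 'I_s}}) : lpoly :=
  lsum D (fun tau => lmul (lprod tau (fun i => lmon (v i)))
                          (lprod (~: tau) (fun j => l1m (v j)))).

Definition H_link (v : 'I_s -> 'rV[int]_n) (D : {set {set 'I_s}})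
    (tau : {set 'I_s}) : lpoly :=
  lsum (link D tau) (fun g => lmul (lprod g (fun i => lmon (v i)))
                          (lprod (link_rays D tau :\: g) (fun j => l1m (v j)))).

Definition box_indic (R : realType) (v : 'I_s -> 'rV[int]_n)
    (tau : {set 'I_s}) : 'rV[int]_n -> int :=
  indic (fun w => exists a : 'I_s -> R, (forall i, i \in tau -> 0 < a i < 1) /\
           toR R w = \sum_(i in tau) a i *: toR R (v i)).

End Defs.

(* Main.v *)
Require Import Defs.
From HB Require Import structures.
From mathcomp Require Import all_boot all_order all_algebra.
From mathcomp Require Import boolp reals.
From mathcomp Require Import lra.
Import Order.TTheory GRing.Theory Num.Theory.
Local Open Scope ring_scope.
Set Implicit Arguments. Unset Strict Implicit. Unset Printing Implicit Defensive.

Section Conv.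
Variable n : nat.
Implicit Types (p q : lpoly n) (f g : 'rV[int]_n -> int).

Lemma conv_lmul p q f : conv (lmul p q) f = conv p (conv q f).
Proof.
apply: funext => w; rewrite /conv /lmul big_allpairs_dep /=.
apply: eq_bigr => a _; rewrite big_distrr /=; apply: eq_bigr => b _.
by rewrite mulrA opprD addrA.
Qed.

Lemma conv_comm p q f : conv p (conv q f) = conv q (conv p f).
Proof.
apply: funext => w; rewrite /conv.
under eq_bigr do rewrite big_distrr.
rewrite exchange_big /=; apply: eq_bigr => b _; rewrite big_distrr /=.
apply: eq_bigr => a _; rewrite mulrCA; congr (_ * (_ * f _)).
by rewrite -!addrA [- _ + _]addrC.
Qed.

Lemma conv_lone f : conv (lone n) f = f.
Proof. by apply: funext => w; rewrite /conv big_seq1 /= mul1r subr0. Qed.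

Lemma conv_sum (I : finType) (P : pred I) p (F : I -> 'rV[int]_n -> int) w :
  conv p (fun y => \sum_(i | P i) F i y) w = \sum_(i | P i) conv p (F i) w.
Proof.
rewrite /conv; under eq_bigr do rewrite big_distrr.
by rewrite exchange_big.
Qed.

Lemma conv0 p w : conv p (fun _ => 0) w = 0.
Proof. by rewrite /conv big1 // => t _; rewrite mulr0. Qed.

Lemma conv_lsum (I : finType) (A : {set I}) F f w :
  conv (lsum A F) f w = \sum_(i in A) conv (F i) f w.
Proof.
by rewrite /conv /lsum big_flatten /= big_map big_enum.
Qed.

Lemma conv_l1m v f w : conv (l1m v) f w = f w - f (w - v).
Proof.
by rewrite /conv big_cons big_seq1 /= subr0 mul1r mulN1r.
Qed.

Lemma conv_lmon v f w : conv (lmon v) f w = f (w - v).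
Proof. by rewrite /conv big_seq1 /= mul1r. Qed.

Definition lprodL (I : Type) (r : seq I) (F : I -> lpoly n) : lpoly n :=
  foldr (fun i acc => lmul (F i) acc) (lone n) r.

Lemma lprodE (I : finType) (A : {set I}) F : lprod A F = lprodL (enum A) F.
Proof. by []. Qed.

Lemma convL_cons (I : Type) (x : I) r F f :
  conv (lprodL (x :: r) F) f = conv (F x) (conv (lprodL r F) f).
Proof. by rewrite /= conv_lmul. Qed.

Lemma convL_cat (I : Type) (r1 r2 : seq I) F f :
  conv (lprodL (r1 ++ r2) F) f = conv (lprodL r1 F) (conv (lprodL r2 F) f).
Proof.
elim: r1 f => [|x r IH] f /=; first by rewrite conv_lone.
by rewrite !conv_lmul IH.
Qed.

Lemma convL_comm1 (I : Type) (x : I) r F f :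
  conv (F x) (conv (lprodL r F) f) = conv (lprodL r F) (conv (F x) f).
Proof.
elim: r f => [|y r IH] f /=; first by rewrite !conv_lone.
by rewrite !conv_lmul conv_comm IH.
Qed.

Lemma convL_perm (I : eqType) (r1 r2 : seq I) F f :
  perm_eq r1 r2 -> conv (lprodL r1 F) f = conv (lprodL r2 F) f.
Proof.
elim: r1 r2 f => [|x r1 IH] r2 f.
  by rewrite perm_sym => /perm_nilP ->.
move=> Hp.
have xr2 : x \in r2 by rewrite -(perm_mem Hp) mem_head.
case/splitPr: xr2 Hp => r2a r2b Hp.
have Hp' : perm_eq r1 (r2a ++ r2b).
  by rewrite -(perm_cons x) (perm_trans Hp) // -cat1s perm_catCA.
rewrite convL_cons (IH _ _ Hp') convL_cat convL_cat convL_cons.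
by rewrite convL_comm1.
Qed.

Lemma conv_lprodU (I : finType) (A B C : {set I}) F f :
  [disjoint A & B] -> C = A :|: B ->
  conv (lprod C F) f = conv (lprod A F) (conv (lprod B F) f).
Proof.
move=> dAB ->; rewrite !lprodE -convL_cat; apply: convL_perm.
apply: uniq_perm; first exact: enum_uniq.
  rewrite cat_uniq !enum_uniq /= andbT; apply/hasPn => x.
  rewrite !mem_enum => xB; apply/negP => xA.
  by move: dAB; rewrite disjoint_subset => /subsetP /(_ x xA); rewrite inE xB.
by move=> x; rewrite mem_cat !mem_enum in_setU.
Qed.

Lemma conv_lprod_lmon (I : finType) (A : {set I}) (v : I -> 'rV[int]_n) f w :
  conv (lprod A (fun i => lmon (v i))) f w = f (w - \sum_(i in A) v i).
Proof.
rewrite lprodE -big_enum; elim: (enum A) f w => [|x r IH] f w /=.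
  by rewrite conv_lone big_nil subr0.
rewrite conv_lmul conv_lmon IH big_cons; congr f.
by rewrite opprD addrA.
Qed.

End Conv.


Section ToR.
Variables (R : realType) (n : nat).

Lemma toR_add (a b : 'rV[int]_n) : toR R (a + b) = toR R a + toR R b.
Proof. by apply/matrixP => i j; rewrite !mxE intrD. Qed.
Lemma toR_opp (a : 'rV[int]_n) : toR R (- a) = - toR R a.
Proof. by apply/matrixP => i j; rewrite !mxE intrN. Qed.
Lemma toR_sub (a b : 'rV[int]_n) : toR R (a - b) = toR R a - toR R b.
Proof. by rewrite toR_add toR_opp. Qed.
Lemma toR0 : toR R (0 : 'rV[int]_n) = 0.
Proof. by apply/matrixP => i j; rewrite !mxE. Qed.
Lemma toR_sum (I : finType) (P : pred I) (F : I -> 'rV[int]_n) :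
  toR R (\sum_(i | P i) F i) = \sum_(i | P i) toR R (F i).
Proof.
apply: (big_morph (toR R)); [exact: toR_add | exact: toR0].
Qed.
Lemma toR_inj : injective (toR R : 'rV[int]_n -> _).
Proof.
move=> a b /matrixP H; apply/matrixP => i j; move: (H i j); rewrite !mxE.
exact: intr_inj.
Qed.
Lemma toRZ (k : int) (a : 'rV[int]_n) : toR R (k *: a) = k%:~R *: toR R a.
Proof. by apply/matrixP => i j; rewrite !mxE intrM. Qed.
End ToR.


Section Geo.
Variables (R : realType) (n s : nat) (v : 'I_s -> 'rV[int]_n)
  (D : {set {set 'I_s}}).
Hypothesis Hindep : forall S : {set 'I_s}, S \in D -> forall c : 'I_s -> R,
        \sum_(i in S) c i *: toR R (v i) = 0 -> forall i, i \in S -> c i = 0.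

Implicit Types (tau g rho : {set 'I_s}) (w : 'rV[int]_n) (i j : 'I_s) (x : R).

Definition isint (x : R) : Prop := exists k : int, x = k%:~R.

Definition cnd (g rho : {set 'I_s}) (i : 'I_s) (x : R) : Prop :=
  if i \in g then (if i \in rho then 0 < x /\ x < 1 else 0 < x /\ ~ isint x)
  else (if i \in rho then x = 1 else isint x /\ 1 <= x).

Definition Eset (tau g rho : {set 'I_s}) (w : 'rV[int]_n) : Prop :=
  exists c : 'I_s -> R, (forall i, i \in tau -> cnd g rho i (c i)) /\
    toR R w = \sum_(i in tau) c i *: toR R (v i).

Lemma noint01 (x : R) : 0 < x /\ x < 1 -> ~ isint x.
Proof.
case => h0 h1 [k kE]; move: h0 h1; rewrite kE ltr0z ltrz1.
by case: k {kE} => [[|k]|k].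
Qed.

Lemma isint1 : isint 1.
Proof. by exists 1. Qed.

Lemma uniq_coord (S : {set 'I_s}) (a b : 'I_s -> R) : S \in D ->
  \sum_(i in S) a i *: toR R (v i) = \sum_(i in S) b i *: toR R (v i) ->
  forall i, i \in S -> a i = b i.
Proof.
move=> SD E i iS; apply/eqP; rewrite -subr_eq0; apply/eqP.
apply: (Hindep SD (c := fun i => a i - b i)) iS.
under eq_bigr do rewrite scalerBl.
by rewrite sumrB E subrr.
Qed.

Lemma sum_shift (S : {set 'I_s}) (c : 'I_s -> R) (V : 'I_s -> 'rV[R]_n) i d :
  i \in S ->
  \sum_(j in S) (if j == i then c j + d else c j) *: V j =
  \sum_(j in S) c j *: V j + d *: V i.
Proof.
move=> iS; rewrite (bigD1 i) //= [in RHS](bigD1 i) //= eqxx scalerDl.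
rewrite -!addrA; congr (_ + _); rewrite addrC; congr (_ + _).
by apply: eq_bigr => j /andP [_ /negbTE ->].
Qed.

Lemma cnd_other g rho i j x : j != i -> cnd g (i |: rho) j x = cnd g rho j x.
Proof. by move=> ji; rewrite /cnd in_setU1 (negbTE ji). Qed.

Lemma cnd_weak g rho i x : i \notin rho -> cnd g (i |: rho) i x -> cnd g rho i x.
Proof.
rewrite /cnd setU11 => /negbTE ->; case: (i \in g) => [h|->].
  split; [by case: h | exact: noint01].
by split; [exact: isint1 | ].
Qed.

Lemma cnd_pos g rho i x : i \notin rho -> cnd g rho i x -> 0 < x.
Proof.
rewrite /cnd => /negbTE ->; case: (i \in g) => [[]//|[_ h]].
exact: lt_le_trans h.
Qed.

Lemma cnd_lt1 g rho i x : cnd g (i |: rho) i x -> x <= 1.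
Proof.
rewrite /cnd setU11; case: (i \in g) => [[_ /ltW]//|->//].
Qed.

Lemma cnd_up g rho i x : i \notin rho -> cnd g rho i x -> cnd g rho i (x + 1).
Proof.
rewrite /cnd => /negbTE ->; case: (i \in g) => [[h1 h2]|[[k ->] h]].
  split; first by rewrite addr_gt0.
  by move=> [k kE]; apply: h2; exists (k - 1); rewrite intrB -kE addrK.
split; first by exists (k + 1); rewrite intrD.
by rewrite lerDr (le_trans _ h).
Qed.

Lemma cnd_down g rho i x : i \notin rho -> cnd g rho i x ->
  ~ cnd g (i |: rho) i x -> cnd g rho i (x - 1).
Proof.
rewrite /cnd setU11 => /negbTE ->; case: (i \in g) => [[h1 h2] h3|[[k kE] h] h3].
  have x1 : 1 < x.
    rewrite ltNge; apply/negP => hx; rewrite le_eqVlt in hx.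
    case/orP: hx => [/eqP x1|x1].
      by apply: h2; rewrite x1; exact: isint1.
    by apply: h3; split.
  split; first by rewrite subr_gt0.
  by move=> [k kE]; apply: h2; exists (k + 1); rewrite intrD -kE subrK.
have x1 : 1 < x by rewrite lt_neqAle h andbT; apply/eqP => e; apply: h3.
split; first by exists (k - 1); rewrite intrB kE.
move: x1; rewrite kE ltr1z => x1.
have -> : (k%:~R - 1 : R) = (k - 1)%:~R by rewrite intrB.
by rewrite ler1z lerBrDl.
Qed.


Lemma Dstep tau g rho i w : tau \in D -> i \in tau -> i \notin rho ->
  conv (l1m (v i)) (indic (Eset tau g rho)) w = indic (Eset tau g (i |: rho)) w.
Proof.
move=> tD itau irho; rewrite conv_l1m /indic.
have shiftE : forall c : 'I_s -> R, forall d,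
   \sum_(j in tau) (if j == i then c j + d else c j) *: toR R (v j) =
   \sum_(j in tau) c j *: toR R (v j) + d *: toR R (v i).
  by move=> c d; apply: sum_shift.
have cndE : forall (c : 'I_s -> R) d rh, (forall j, j \in tau -> cnd g rh j (c j)) ->
   cnd g rh i (c i + d) ->
   forall j, j \in tau -> cnd g rh j (if j == i then c j + d else c j).
  by move=> c d rh H Hi j jt; case: eqP => [->//|]; auto.
case: (asboolP (Eset tau g (i |: rho) w)) => H1.
  have H2 : Eset tau g rho w.
    case: H1 => c [Hc Hw]; exists c; split => // j jt.
    case: (eqVneq j i) => [->|ji]; first by apply: cnd_weak => //; apply: Hc.
    by rewrite -(cnd_other _ _ _ ji); apply: Hc.
  have H3 : ~ Eset tau g rho (w - v i).
    case: H1 => c [Hc Hw] [c' [Hc' Hw']].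
    have : toR R w = \sum_(j in tau) (if j == i then c' j + 1 else c' j) *: toR R (v j).
      by rewrite shiftE -Hw' toR_sub scale1r subrK.
    rewrite Hw => /(uniq_coord tD) /(_ i itau); rewrite eqxx => ci.
    have := cnd_pos irho (Hc' i itau); have := cnd_lt1 (Hc i itau).
    rewrite ci => h1 h2; move: h1; lra.
  by rewrite asboolT // asboolF // subr0.
case: (asboolP (Eset tau g rho w)) => H2; case: (asboolP (Eset tau g rho (w - v i))) => H3 //.
- exfalso; apply: H3; case: H2 => c [Hc Hw].
  have nci : ~ cnd g (i |: rho) i (c i).
    move=> hci; apply: H1; exists c; split => // j jt.
    case: (eqVneq j i) => [->//|ji].
    by rewrite (cnd_other _ _ _ ji); apply: Hc.
  exists (fun j => if j == i then c j + -1 else c j); split.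
    apply: cndE => //; apply: cnd_down => //; exact: Hc.
  by rewrite shiftE toR_sub -Hw scaleN1r.
- exfalso; apply: H2; case: H3 => c [Hc Hw].
  exists (fun j => if j == i then c j + 1 else c j); split.
    apply: cndE => //; apply: cnd_up => //; exact: Hc.
  by rewrite shiftE -Hw toR_sub scale1r subrK.
Qed.


Lemma Diter tau g rho0 (r : seq 'I_s) : tau \in D -> uniq r ->
  {subset r <= tau} -> (forall j, j \in r -> j \notin rho0) ->
  conv (lprodL r (fun i => l1m (v i))) (indic (Eset tau g rho0)) =
  indic (Eset tau g (rho0 :|: [set j in r])).
Proof.
move=> tD; elim: r => [|x r IH] /=; rewrite ?lprodE.
  move=> _ _ _; rewrite conv_lone; congr (indic _); congr Eset.
  by apply/setP => y; rewrite !inE orbF.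
case/andP => xr ur sub dis; rewrite conv_lmul IH //; last 2 first.
- by move=> y yr; apply: sub; rewrite inE yr orbT.
- by move=> y yr; apply: dis; rewrite inE yr orbT.
apply: funext => w; rewrite Dstep //; last first.
- by rewrite !inE negb_or dis ?inE ?eqxx.
- by apply: sub; rewrite inE eqxx.
congr (indic _); congr Eset; apply/setP => y; rewrite !inE.
by rewrite orbCA.
Qed.

Lemma Dtau tau g : tau \in D ->
  conv (lprod tau (fun i => l1m (v i))) (indic (Eset tau g set0)) =
  indic (Eset tau g tau).
Proof.
move=> tD; rewrite lprodE Diter //; first last.
- by move=> j; rewrite inE.
- by move=> j; rewrite mem_enum.
- exact: enum_uniq.
by congr (indic _); congr Eset; apply/setP => y; rewrite !inE mem_enum.
Qed.

Lemma Ebox tau g : g \subset tau ->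
  indic (Eset tau g tau) =
  conv (lprod (tau :\: g) (fun i => lmon (v i))) (box_indic R v g).
Proof.
move=> gt; apply: funext => w; rewrite conv_lprod_lmon /box_indic /indic.
congr (if _ then _ else _); apply: asbool_equiv_eq; split.
- case=> c [Hc Hw]; exists c; split.
    move=> i ig; have := Hc i (subsetP gt i ig); rewrite /cnd ig (subsetP gt i ig).
    by case=> -> ->.
  rewrite toR_sub toR_sum Hw (big_setID g) /= (setIidPr gt).
  rewrite [X in _ + X - _](eq_bigr (fun i => toR R (v i))) ?addrK //.
  move=> i; rewrite inE => /andP [ig it]; have := Hc i it.
  by rewrite /cnd it (negbTE ig) => ->; rewrite scale1r.
- case=> a [Ha Hw]; exists (fun i => if i \in g then a i else 1); split.
    move=> i it; rewrite /cnd it; case: ifP => ig; rewrite ig //.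
    by case/andP: (Ha i ig) => h1 h2; split.
  rewrite (big_setID g) /= (setIidPr gt).
  have -> : \sum_(i in g) (if i \in g then a i else 1) *: toR R (v i) =
            \sum_(i in g) a i *: toR R (v i).
    by apply: eq_bigr => i ->.
  have -> : \sum_(i in tau :\: g) (if i \in g then a i else 1) *: toR R (v i) =
            \sum_(i in tau :\: g) toR R (v i).
    by apply: eq_bigr => i; rewrite inE => /andP [/negbTE -> _]; rewrite scale1r.
  by rewrite -Hw toR_sub toR_sum subrK.
Qed.


Hypothesis Hface : forall S T : {set 'I_s}, S \in D -> T \subset S -> T \in D.
Hypothesis Hinter : forall S T : {set 'I_s}, S \in D -> T \in D -> forall x : 'rV[R]_n,
        (cone_of S (fun i => toR R (v i)) x /\ cone_of T (fun i => toR R (v i)) x)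
        <-> cone_of (S :&: T) (fun i => toR R (v i)) x.

Lemma E0_pos tau g w c : (forall i, i \in tau -> cnd g set0 i (c i)) ->
  forall i, i \in tau -> 0 < c i.
Proof. by move=> Hc i it; apply: (cnd_pos (rho := set0)); rewrite ?inE //; apply: Hc. Qed.

Lemma E0_cone tau g w : Eset tau g set0 w -> cone_of tau (fun i => toR R (v i)) (toR R w).
Proof.
case=> c [Hc Hw]; exists (fun i => if i \in tau then c i else 0); split.
  by move=> i; case: ifP => it //; apply/ltW/(E0_pos w Hc).
by rewrite Hw; apply: eq_bigr => i ->.
Qed.

Lemma E0_g tau g c : (forall i, i \in tau -> cnd g set0 i (c i)) ->
  forall i, i \in tau -> (i \in g) = `[< ~ isint (c i) >].
Proof.
move=> Hc i it; have := Hc i it; rewrite /cnd inE.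
case: (i \in g) => [[_ h]|[h _]]; first by rewrite asboolT.
by rewrite asboolF //; apply.
Qed.

Lemma E0_sub tau tau' g g' w : tau \in D -> tau' \in D ->
  Eset tau g set0 w -> Eset tau' g' set0 w -> tau \subset tau'.
Proof.
move=> tD tD' H1 H2; have := E0_cone H1; have := E0_cone H2.
move=> C2 C1; have [d [_ Hd]] := (proj1 (Hinter tD tD' (toR R w)) (conj C1 C2)).
case: H1 => c [Hc Hw].
have : \sum_(i in tau) c i *: toR R (v i) =
       \sum_(i in tau) (if i \in tau' then d i else 0) *: toR R (v i).
  rewrite -Hw Hd [RHS](big_setID tau') /=.
  rewrite [X in _ = _ + X]big1 ?addr0; last first.
    by move=> i; rewrite inE => /andP [/negbTE -> _]; rewrite scale0r.
  by apply: eq_bigr => i; rewrite inE => /andP [_ ->].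
move/(uniq_coord tD) => E; apply/subsetP => i it.
have := E0_pos w Hc it; rewrite (E i it); case: ifP => //.
by rewrite ltxx.
Qed.

Lemma E0_uniq tau tau' g g' w : tau \in D -> tau' \in D ->
  g \subset tau -> g' \subset tau' ->
  Eset tau g set0 w -> Eset tau' g' set0 w -> tau = tau' /\ g = g'.
Proof.
move=> tD tD' gt gt' H1 H2.
have ett : tau = tau' by apply/eqP; rewrite eqEsubset (E0_sub tD tD' H1 H2) (E0_sub tD' tD H2 H1).
split => //; subst tau'.
case: H1 => c [Hc Hw]; case: H2 => c' [Hc' Hw'].
have E := uniq_coord tD (etrans (esym Hw) Hw').
apply/setP => i; case: (boolP (i \in tau)) => it.
  by rewrite (E0_g Hc it) (E0_g Hc' it) E.
apply/idP/idP => h; [by move: (subsetP gt i h); rewrite (negbTE it)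
  | by move: (subsetP gt' i h); rewrite (negbTE it)].
Qed.

Lemma decomp (P : 'rV[R]_n -> Prop) :
  (forall z, P z <-> exists2 S, S \in D & cone_of S (fun i => toR R (v i)) z) ->
  indic (fun y => P (toR R y)) =
  (fun y => \sum_(tau in D) \sum_(g : {set 'I_s} | g \subset tau) indic (Eset tau g set0) y).
Proof.
move=> HP; apply: funext => y; rewrite {1}/indic.
case: (asboolP (P (toR R y))) => Hy; last first.
  rewrite big1 // => tau tD; rewrite big1 // => g _.
  rewrite /indic asboolF // => HE; apply: Hy; apply/HP; exists tau => //.
  exact: E0_cone HE.
case/HP: Hy => S SD [c [c0 Hc]].
pose tau := [set i in S | 0 < c i].
pose g := [set i in tau | `[< ~ isint (c i) >]].
have tD : tau \in D by apply: (Hface SD); apply/subsetP => i; rewrite inE => /andP [].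
have gt : g \subset tau by apply/subsetP => i; rewrite inE => /andP [].
have HE : Eset tau g set0 y.
  exists c; split.
    move=> i it; rewrite /cnd in_set0; have cpos : 0 < c i by move: it; rewrite inE => /andP [].
    case: ifP => ig.
      by split => //; move: ig; rewrite inE it /= => /asboolP.
    move: ig; rewrite inE it /= => /negbT /asboolPn /contrapT [k kE].
    split; first by exists k.
    by move: cpos; rewrite kE ltr0z ler1z.
  rewrite Hc (big_setID tau) /=.
  have -> : S :&: tau = tau by apply/setIidPr/subsetP => i; rewrite inE => /andP [].
  rewrite [X in _ + X]big1 ?addr0 // => i; rewrite !inE negb_and => /andP [].
  move=> /orP [/negP //|h] _; have : c i = 0 by apply/eqP; rewrite eq_le c0 andbT leNgt.
  by move=> ->; rewrite scale0r.
rewrite (bigD1 tau) //= (bigD1 g) //= {1}/indic asboolT //.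
rewrite big1 ?addr0; last first.
  move=> g' /andP [g't g'g]; rewrite /indic asboolF // => HE'.
  have [_ eg] := E0_uniq tD tD gt g't HE HE'.
  by move: g'g; rewrite eg eqxx.
rewrite big1 ?addr0 // => tau' /andP [t'D t't].
rewrite big1 // => g' g't'; rewrite /indic asboolF // => HE'.
have [et _] := E0_uniq tD t'D gt g't' HE HE'.
by move: t't; rewrite et eqxx.
Qed.

End Geo.


Section Comb.
Variables (s : nat) (D : {set {set 'I_s}}).
Hypothesis Hface : forall S T : {set 'I_s}, S \in D -> T \subset S -> T \in D.
Hypothesis Hrays : forall i, [set i] \in D.
Implicit Types (S T g tau : {set 'I_s}).

Lemma max_exists S : S \in D -> exists M, maximal_cone D M /\ S \subset M.
Proof.
move=> SD.
case: (@arg_maxnP _ S (fun M => (M \in D) && (S \subset M)) (fun M => #|M|)).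
  by rewrite SD subxx.
move=> M /andP [MD SM] Hmax; exists M; split => //.
apply/andP; split => //; apply/forall_inP => S' S'D; apply/negP => MS'.
have := Hmax S'; rewrite S'D (subset_trans SM (proper_sub MS')) => /(_ isT).
by move=> h; move: (proper_card MS'); rewrite ltnNge; move: h => /= ->.
Qed.

Lemma LR_notin g j : j \in link_rays D g -> j \notin g.
Proof.
rewrite inE => /existsP [h /andP [hL jh]]; move: hL; rewrite inE => /and3P [_ /eqP hg _].
apply/negP => jg; have : j \in h :&: g by rewrite inE jh jg.
by rewrite hg inE.
Qed.

Lemma NS_eq g : g \in D -> not_in_star D g = ~: (g :|: link_rays D g).
Proof.
move=> gD; apply/setP => i; rewrite !inE negb_or.
apply/forallP/idP.
- move=> H; apply/andP; split.
    apply/negP => ig; have [M [/andP [MD Mmax] gM]] := max_exists gD.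
    by move: (H M); rewrite /maximal_cone MD Mmax gM /= (subsetP gM i ig).
  apply/negP => /existsP [h /andP [hL ih]].
  move: hL; rewrite inE => /and3P [hD _ hgD].
  have [M [/andP [MD Mmax] hgM]] := max_exists hgD.
  have gM : g \subset M by apply: subset_trans hgM; apply: subsetUr.
  move: (H M); rewrite /maximal_cone MD Mmax gM /=.
  by rewrite (subsetP hgM i) // inE ih.
- case/andP => ig iL M; apply/implyP => /andP [/andP [MD _] gM].
  apply/negP => iM; move/negP: iL; apply; apply/existsP; exists [set i].
  rewrite set11 andbT inE Hrays /=; apply/andP; split.
    apply/eqP/setP => j; rewrite !inE; apply/negP => /andP [/eqP -> ]; exact/negP.
  apply: (Hface MD); apply/subsetP => j; rewrite !inE => /orP [/eqP ->//|].
  exact: (subsetP gM).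
Qed.

Lemma link0 : link D set0 = D.
Proof. by apply/setP => g; rewrite !inE setI0 setU0 eqxx andbC andbb. Qed.

End Comb.


Section Unimod.
Variables (R : realType) (n s : nat) (v : 'I_s -> 'rV[int]_n)
  (D : {set {set 'I_s}}).
Hypothesis Hindep : forall S : {set 'I_s}, S \in D -> forall c : 'I_s -> R,
        \sum_(i in S) c i *: toR R (v i) = 0 -> forall i, i \in S -> c i = 0.
Hypothesis Hprim : forall i, primitive (v i).
Hypothesis Hinj : injective v.

Definition BR (B : 'M[int]_n) : 'M[R]_n := map_mx (fun z : int => z%:~R) B.

Lemma toR_mul (y : 'rV[int]_n) B : toR R (y *m B) = toR R y *m BR B.
Proof. exact: map_mxM. Qed.

Lemma toR_e (j k : 'I_n) : (toR R ('e_j : 'rV[int]_n)) 0 k = (k == j)%:R.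
Proof. by rewrite !mxE eqxx /=; case: (k == j). Qed.

Lemma row_coord B (BU : B \in unitmx) j :
  toR R (row j B) *m BR (invmx B) = toR R 'e_j.
Proof. by rewrite -toR_mul rowE mulmxK. Qed.

Lemma unimod0 : unimodular R v set0.
Proof.
exists 1%:M; split; first exact: unitmx1.
exists set0 => x; split; case=> c [_ ->]; rewrite big_set0;
  by exists (fun _ => 0); split => //; rewrite big_set0.
Qed.


Lemma per_i B J g (BU : B \in unitmx)
  (Hc : forall x, cone_of g (fun i => toR R (v i)) x <->
                  cone_of J (fun j => toR R (row j B)) x)
  (gD : g \in D) i : i \in g -> exists j, v i = row j B.
Proof.
move=> ig.
have [C [C0 HC]] : cone_of J (fun j => toR R (row j B)) (toR R (v i)).
  apply/Hc; exists (fun k => (k == i)%:R); split; first by move=> k; rewrite ler0n.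
  rewrite (bigD1 i) //= eqxx scale1r big1 ?addr0 // => k /andP [_ /negbTE ->].
  by rewrite scale0r.
have Hd : forall j, exists d : 'I_s -> R, j \in J ->
    (forall k, 0 <= d k) /\ toR R (row j B) = \sum_(k in g) d k *: toR R (v k).
  move=> j; case: (boolP (j \in J)) => jJ; last by exists (fun _ => 0).
  have [d [d0 Hd]] : cone_of g (fun i => toR R (v i)) (toR R (row j B)).
    apply/Hc; exists (fun k => (k == j)%:R); split; first by move=> k; rewrite ler0n.
    rewrite (bigD1 j) //= eqxx scale1r big1 ?addr0 // => k /andP [_ /negbTE ->].
    by rewrite scale0r.
  by exists d.
have [dd Hdd] := choice Hd.
pose M k := \sum_(j in J) C j * dd j k.
have key : forall k, k \in g -> M k = (k == i)%:R.
  have : \sum_(k in g) (M k - (k == i)%:R) *: toR R (v k) = 0.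
    under eq_bigr do rewrite scalerBl.
    rewrite sumrB; apply/eqP; rewrite subr_eq0; apply/eqP.
    rewrite [in RHS](bigD1 i) //= eqxx scale1r [X in _ + X]big1 ?addr0; last first.
      by move=> k /andP [_ /negbTE ->]; rewrite scale0r.
    rewrite HC /M.
    under eq_bigr do rewrite scaler_suml.
    rewrite exchange_big /=; apply: eq_bigr => j jJ.
    rewrite (proj2 (Hdd j jJ)) scaler_sumr; apply: eq_bigr => k _.
    by rewrite scalerA.
  move/(Hindep gD) => h k kg; apply/eqP; rewrite -subr_eq0; apply/eqP; exact: h.
have [j0 [j0J Cpos dpos]] : exists j0, [/\ j0 \in J, 0 < C j0 & 0 < dd j0 i].
  case: (boolP [exists j in J, C j * dd j i != 0]).
    case/exists_inP => j jJ; rewrite mulf_eq0 negb_or => /andP [h1 h2].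
    exists j; split => //; rewrite lt_def ?h1 ?h2 ?C0 //.
    by have [+ _] := Hdd j jJ; move=> ->.
  rewrite negb_exists_in => /forall_inP h.
  have := key i ig; rewrite eqxx /M big1 ?(@oner_eq0 R) //.
    by move=> e; exfalso; move: (@oner_neq0 R); rewrite /= -[1]/(true%:R) -e eqxx.
  by move=> j jJ; apply/eqP; move: (h j jJ); rewrite negbK.
have dzero : forall k, k \in g -> k != i -> dd j0 k = 0.
  move=> k kg ki; have := key k kg; rewrite (negbTE ki) /M => h0.
  have := psumr_eq0P _ h0 j0J.
  move=> /(_ _) /eqP; rewrite mulf_eq0 => h1.
  have {}h1 := h1 (fun j jJ => mulr_ge0 (C0 j) (proj1 (Hdd j jJ) k)).
  by move: h1; rewrite (gt_eqF Cpos) /= => /eqP.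
have bj0 : toR R (row j0 B) = dd j0 i *: toR R (v i).
  rewrite (proj2 (Hdd j0 j0J)) (bigD1 i) //= big1 ?addr0 // => k /andP [kg ki].
  by rewrite dzero // scale0r.
pose y := v i *m invmx B.
have yv : v i = y *m B by rewrite /y mulmxKV.
have yE0 : y = v i *m invmx B by [].
clearbody y.
have ey : toR R 'e_j0 = dd j0 i *: toR R y.
  by rewrite yE0 toR_mul -(row_coord BU) bj0 -scalemxAl.
have ycoord : forall k, (toR R 'e_j0) 0 k = dd j0 i * (y 0 k)%:~R.
  by move=> k; rewrite ey !mxE.
have yE : y = (y 0 j0) *: 'e_j0.
  apply/matrixP => a k; rewrite (ord1 a) !mxE eqxx /=.
  case: (eqVneq k j0) => [->|kj]; first by rewrite mulr1.
  rewrite mulr0; move: (ycoord k); rewrite toR_e (negbTE kj) /= => /esym /eqP.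
  by rewrite mulf_eq0 (gt_eqF dpos) /= intr_eq0 => /eqP.
have ypos : 0 < y 0 j0.
  move: (ycoord j0); rewrite toR_e eqxx /= => h.
  by rewrite -(ltr0z R) -(pmulr_rgt0 _ dpos) -h ltr01.
have Hz : v i = (y 0 j0) *: row j0 B by rewrite yv {1}yE -scalemxAl -rowE.
have := (Hprim i).2 _ _ Hz; rewrite gtr0_norm // => e1.
by exists j0; rewrite Hz e1 scale1r.
Qed.


Lemma box_zero g : g \in D -> g != set0 -> unimodular R v g ->
  box_indic R v g = (fun _ => 0).
Proof.
move=> gD /set0Pn [i0 i0g] [B [BU [J Hc]]].
apply: funext => w; rewrite /box_indic /indic asboolF // => [[a [Ha Hw]]].
have [j00 _] := per_i BU Hc gD i0g.
have Hf : forall i, exists j, i \in g -> v i = row j B.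
  move=> i; case: (boolP (i \in g)) => ig; last by exists j00.
  by have [j hj] := per_i BU Hc gD ig; exists j.
have [f Hf'] := choice Hf.
pose j0 := f i0.
pose y := w *m invmx B; have yE : y = w *m invmx B by [].
clearbody y.
have : toR R y = \sum_(i in g) a i *: toR R 'e_(f i).
  rewrite yE toR_mul Hw mulmx_suml; apply: eq_bigr => i ig.
  by rewrite -scalemxAl (Hf' i ig) row_coord.
move/(congr1 (fun M : 'rV[R]_n => M 0 j0)); rewrite !mxE summxE.
rewrite (bigD1 i0) //= big1 ?addr0; last first.
  move=> i /andP [ig ii0]; rewrite mxE toR_e.
  case: (eqVneq j0 (f i)) => [e|]; last by move=> _; rewrite mulr0.
  exfalso; move/negP: ii0; apply; apply/eqP; apply: Hinj.
  by rewrite (Hf' i ig) (Hf' i0 i0g) -e.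
rewrite !mxE /j0 !eqxx /= mulr1 => e.
case/andP: (Ha i0 i0g); rewrite -e ltr0z ltrz1.
by case: (y 0 j0) => [[|k]|k].
Qed.

End Unimod.

Unset Implicit Arguments. Set Strict Implicit. Set Printing Implicit Defensive.

Lemma box_set0 (R : realType) n s (v : 'I_s -> 'rV[int]_n) :
  box_indic R v set0 = (fun y => if y == 0 then 1 else 0).
Proof.
apply: funext => y; rewrite /box_indic /indic.
case: (eqVneq y 0) => [->|y0].
  by rewrite asboolT //; exists (fun _ => 0); split => [i|]; rewrite ?inE // big_set0 toR0.
rewrite asboolF // => [[a [_]]]; rewrite big_set0 -(toR0 R n) => /toR_inj e.
by move: y0; rewrite e eqxx.
Qed.

Lemma lcoef_conv (R : realType) n s (v : 'I_s -> 'rV[int]_n) (p : lpoly n) w :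
  lcoef p w = conv p (box_indic R v set0) w.
Proof.
rewrite box_set0 /lcoef /conv big_mkcond; apply: eq_bigr => t _.
rewrite subr_eq0 eq_sym; case: ifP => _; [by rewrite mulr1 | by rewrite mulr0].
Qed.

Theorem theorem1p1 (R : realType) (n m s : nat)
    (u : 'I_m -> 'rV[int]_n)            (* generators of the rational cone sigma *)
    (v : 'I_s -> 'rV[int]_n)            (* primitive ray generators of Delta *)
    (D : {set {set 'I_s}})              (* cones of Delta, by their ray sets *)
    (* sigma is strongly convex *)
    (Hsc : forall x : 'rV[R]_n,
        cone_of [set: 'I_m] (fun k => toR R (u k)) x ->
        cone_of [set: 'I_m] (fun k => toR R (u k)) (- x) -> x = 0)
    (* Delta is a simplicial fan with rays exactly the v_i *)
    (Hprim : forall i, primitive (v i))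
    (Hinj : injective v)
    (H0 : set0 \in D)
    (Hrays : forall i, [set i] \in D)
    (Hface : forall S T : {set 'I_s}, S \in D -> T \subset S -> T \in D)
    (Hindep : forall S : {set 'I_s}, S \in D -> forall c : 'I_s -> R,
        \sum_(i in S) c i *: toR R (v i) = 0 -> forall i, i \in S -> c i = 0)
    (Hinter : forall S T : {set 'I_s}, S \in D -> T \in D -> forall x : 'rV[R]_n,
        (cone_of S (fun i => toR R (v i)) x /\ cone_of T (fun i => toR R (v i)) x)
        <-> cone_of (S :&: T) (fun i => toR R (v i)) x)
    (* Delta subdivides sigma *)
    (Hsupp : forall x : 'rV[R]_n,
        cone_of [set: 'I_m] (fun k => toR R (u k)) x <->
        exists2 S, S \in D & cone_of S (fun i => toR R (v i)) x) :
  forall w : 'rV[int]_n,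
    conv (lprod [set: 'I_s] (fun i => l1m (v i)))
         (indic (fun y => cone_of [set: 'I_m] (fun k => toR R (u k)) (toR R y))) w
  = lcoef (H_fan v D) w
    + \sum_(tau in D | ~~ `[< unimodular R v tau >])
        conv (lmul (H_link v D tau) (lprod (not_in_star D tau) (fun i => l1m (v i))))
             (box_indic R v tau) w.
Proof.
move=> w.
set Dm := (fun i => l1m (v i)).
set Tm := (fun i => lmon (v i)).
pose X (g h : {set 'I_s}) :=
  conv (lprod h Tm) (conv (lprod (~: (h :|: g)) Dm) (box_indic R v g)) w.
have HL : conv (lprod [set: 'I_s] Dm)
         (indic (fun y => cone_of [set: 'I_m] (fun k => toR R (u k)) (toR R y))) w =
   \sum_(tau in D) \sum_(g : {set 'I_s} | g \subset tau)
      conv (lprod (~: tau) Dm) (conv (lprod (tau :\: g) Tm) (box_indic R v g)) w.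
  rewrite (decomp Hindep Hface Hinter Hsupp) conv_sum.
  apply: eq_bigr => tau tD; rewrite conv_sum; apply: eq_bigr => g gt.
  rewrite (@conv_lprodU _ _ (~: tau) tau); last by rewrite setUC setUCr.
    by rewrite (@Dtau R n s v D Hindep tau g tD) (Ebox R v gt).
  by rewrite disjoints_subset subxx.
have HX : \sum_(tau in D) \sum_(g : {set 'I_s} | g \subset tau)
      conv (lprod (~: tau) Dm) (conv (lprod (tau :\: g) Tm) (box_indic R v g)) w =
    \sum_(g in D) \sum_(h in link D g) X g h.
  rewrite (exchange_big_dep (fun g => g \in D)) /=; last first.
    by move=> tau g tD gt; apply: Hface tD gt.
  apply: eq_bigr => g gD.
  rewrite (reindex_onto (fun h => h :|: g) (fun tau => tau :\: g)) /=; last first.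
    move=> tau /andP [_ gt]; apply/setP => x; rewrite !inE.
    by case: (boolP (x \in g)) => [xg|_]; rewrite ?orbT ?orbF // (subsetP gt).
  apply: eq_big => h.
    rewrite inE subsetUr andbT.
    case: (eqVneq (h :&: g) set0) => hg.
      have -> : (h :|: g) :\: g = h.
        apply/setP => x; rewrite !inE; case: (boolP (x \in g)) => xg /=.
          apply/esym/negP => xh; have : x \in h :&: g by rewrite inE xh xg.
          by rewrite hg inE.
        by rewrite orbF.
      rewrite eqxx andbT; case: (boolP (h :|: g \in D)) => hgD; last by rewrite !andbF.
      by rewrite (Hface _ _ hgD (subsetUl h g)).
    rewrite /= ?andbF; apply/negbTE/negP => /andP [_ /eqP e].
    case/set0Pn: hg => x; rewrite inE => /andP [xh xg].
    by move: xh; rewrite -e !inE xg.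
  move=> /andP [/andP [_ _] /eqP e]; rewrite /X e.
  by rewrite -(conv_comm (lprod h Tm)) setUC.
have HY : forall g, g \in D ->
    conv (lmul (H_link v D g) (lprod (not_in_star D g) Dm)) (box_indic R v g) w =
    \sum_(h in link D g) X g h.
  move=> g gD; rewrite conv_lmul /H_link conv_lsum; apply: eq_bigr => h hL.
  rewrite conv_lmul /X; congr (conv _ _ w).
  have hLR : h \subset link_rays D g.
    by apply/subsetP => x xh; rewrite inE; apply/existsP; exists h; rewrite hL.
  rewrite (NS_eq Hface Hrays gD).
  rewrite -(@conv_lprodU _ _ (link_rays D g :\: h) (~: (g :|: link_rays D g)) (~: (h :|: g))) //.
    rewrite disjoints_subset setCK; apply/subsetP => x; rewrite !inE.
    by case/andP => _ ->; rewrite orbT.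
  apply/setP => x.
  have h1 : x \in h -> x \in link_rays D g by move=> xh; apply: (subsetP hLR).
  have h2 := @LR_notin _ D g x.
  move: h1 h2; set LR := link_rays D g; clearbody LR; rewrite !inE.
  case: (x \in h); case: (x \in g); case: (x \in LR) => //=.
    by move=> /(_ isT).
  by move=> _ /(_ isT).
have HH : lcoef (H_fan v D) w = \sum_(h in link D set0) X set0 h.
  rewrite (lcoef_conv R n s v) /H_fan conv_lsum link0; apply: eq_bigr => h hD.
  by rewrite conv_lmul /X setU0.
rewrite HL HX (bigD1 set0) //= HH; congr (_ + _).
rewrite [RHS]big_mkcond [LHS]big_mkcond; apply: eq_bigr => g _ /=.
case: (boolP (g \in D)) => gD //=.
case: (eqVneq g set0) => [->|g0] /=.
  by rewrite asboolT //; apply: unimod0.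
case: (asboolP (unimodular R v g)) => hu /=; last by rewrite HY.
rewrite -HY //= (box_zero Hindep Hprim Hinj gD g0 hu).
by rewrite conv0.
Qed.
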